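(* Suppose the $[n, n-k]$-code $C=C_{\Omega}(D, kO)$ has covering radius $\rho(C)=n-\dim(C)-1=k-1$. Let $P\in E(\mathbb{F}_q)\setminus D$ be any rational point on the elliptic curve $E$ (writing $P=(\alpha,\beta)$ when $P\neq O$). Then: 1. Any vector $v\in C_{\Omega}(D, kO-P)\setminus C$ is a deep hole of $C$. 2. If $P=O$, then the syndrome of $v$ is $H(k)v^T=(0,\cdots,0,\sum_{i=1}^{n}\alpha_i^{k/2}v_i,0,\cdots, 0)^T$ if $k$ is even, and $H(k)v^T=(0,\cdots,0,\sum_{i=1}^{n}\alpha_i^{(k-3)/2}\beta_iv_i)^T$ if $k$ is odd. 3. If $P=(\alpha,\beta)\neq O$, then the syndrome of $v$ is $H(k)v^T=b(1,\alpha, \cdots, \alpha^{\lfloor k/2\rfloor}, \beta, \beta\alpha,\cdots, \beta\alpha^{\lfloor (k-3)/2\rfloor})^T$, where $b=\sum_{i=1}^{n}v_i \neq 0.$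
   Context: Let $\mathbb{F}_q$ be a finite field with $q$ elements, $q$ an odd prime power. Let $E$ be the elliptic curve over $\mathbb{F}_q$ given by $y^2=x^3+sx+t$ ($s,t\in\mathbb{F}_q$) together with the point at infinity $O$. Let $D=\{P_i=(\alpha_i,\beta_i)\mid i=1,\dots,n\}\subset E(\mathbb{F}_q)\setminus\{O\}$ be a set of $n$ rational points, and let $k$ be an integer with $2\le k\le n-2$. For a divisor $V$, $\mathcal{L}(V)$ is the Riemann–Roch space of rational functions $f$ with $\mathrm{div}(f)\ge -V$ (together with $0$), and $\Omega(V)$ is the space of Weil differentials $\omega$ with $\mathrm{div}(\omega)\ge V$ (together with $0$). For a divisor $G$ with support disjoint from $D$, the residue code $C_{\Omega}(D,G)$ is the image of $\Omega(G-D)\to\mathbb{F}_q^n$, $\omega\mapsto(\mathrm{res}_{P_1}(\omega),\dots,\mathrm{res}_{P_n}(\omega))$, and the functional code $C_{\mathcal{L}}(D,G)$ is the image of $\mathcal{L}(G)\to\mathbb{F}_q^n$, $f\mapsto(f(P_1),\dots,f(P_n))$; these two codes are dual to each other. Let $C=C_{\Omega}(D,kO)$, whose dual is $C_{\mathcal{L}}(D,kO)$. Since $\mathcal{L}(kO)$ has basis $\{x^iy^j\mid i\ge 0,\ j\in\{0,1\},\ 2i+3j\le k\}$, a parity-check matrix of $C$ is the $k\times n$ matrix $H(k)$ whose $i$-th column is $(1,\alpha_i,\dots,\alpha_i^{\lfloor k/2\rfloor},\beta_i,\alpha_i\beta_i,\dots,\alpha_i^{\lfloor (k-3)/2\rfloor}\beta_i)^T$.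 A deep hole of $C$ is a word $v\in\mathbb{F}_q^n$ whose Hamming distance to $C$ equals the covering radius $\rho(C)=\max_{u\in\mathbb{F}_q^n}\min_{c\in C}d(u,c)$. *)

(* Defs.v *)
From HB Require Import structures.
From mathcomp Require Import all_boot all_order all_algebra.
Set Implicit Arguments. Unset Strict Implicit. Unset Printing Implicit Defensive.
Import GRing.Theory.
Local Open Scope ring_scope.

Inductive point (F : Type) := PInf | PAff of F & F.
Arguments PInf {F}.
Arguments PAff {F}.

Definition on_curve (F : fieldType) (s t : F) (P : point F) : bool :=
  match P with
  | PInf => true
  | PAff a b => b ^+ 2 == a ^+ 3 + s * a + t
  end.

(* The r-th element (r = 0..k-1) of the basis of L(kO), in the order used for
   the rows of H(k): 1, x, ..., x^{floor(k/2)}, y, xy, ..., x^{floor((k-3)/2)} y,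
   evaluated at the affine point (a, b).  There are k./2.+1 + (k.-1)./2 = k
   such monomials for k >= 1. *)
Definition mono (F : fieldType) (k r : nat) (a b : F) : F :=
  if (r < k./2.+1)%N then a ^+ r else a ^+ (r - k./2.+1) * b.

Definition Hmat (F : fieldType) (n k : nat) (alpha beta : 'I_n -> F)
  : 'M[F]_(k, n) :=
  \matrix_(r < k, i < n) mono k r (alpha i) (beta i).

Definition evcol (F : fieldType) (k : nat) (a b : F) : 'cV[F]_k :=
  \col_(r < k) mono k r a b.

(* Functional code C_L(D, kO) = { (f(P_1),...,f(P_n)) | f in L(kO) },
   f written in the basis of L(kO) with coefficient row vector u. *)
Definition CL (F : finFieldType) (n k : nat) (alpha beta : 'I_n -> F)
  : {set 'rV[F]_n} :=
  [set c : 'rV[F]_n | [exists u : 'rV[F]_k, c == u *m Hmat k alpha beta]].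

(* Functional code C_L(D, kO - P):
   - P = O : L(kO - O) = L((k-1)O), with basis given by the same formula for k-1;
   - P = (a,b) affine : L(kO - P) = { f in L(kO) | f(P) = 0 }. *)
Definition CL_minus (F : finFieldType) (n k : nat) (alpha beta : 'I_n -> F)
  (P : point F) : {set 'rV[F]_n} :=
  match P with
  | PInf => CL k.-1 alpha beta
  | PAff a b =>
      [set c : 'rV[F]_n | [exists u : 'rV[F]_k,
         (u *m evcol k a b == 0) && (c == u *m Hmat k alpha beta)]]
  end.

Definition dual_code (F : finFieldType) (n : nat) (C : {set 'rV[F]_n})
  : {set 'rV[F]_n} :=
  [set v : 'rV[F]_n | [forall c in C, v *m c^T == 0]].

(* Residue codes, via the duality C_Omega(D,G) = C_L(D,G)^perp. *)
Definition COmega (F : finFieldType) (n k : nat) (alpha beta : 'I_n -> F)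
  : {set 'rV[F]_n} := dual_code (CL k alpha beta).

Definition COmega_minus (F : finFieldType) (n k : nat) (alpha beta : 'I_n -> F)
  (P : point F) : {set 'rV[F]_n} := dual_code (CL_minus k alpha beta P).

Definition hdist (F : finFieldType) (n : nat) (u v : 'rV[F]_n) : nat :=
  #|[set i : 'I_n | u 0 i != v 0 i]|.

Definition dist_to (F : finFieldType) (n : nat) (C : {set 'rV[F]_n})
  (u : 'rV[F]_n) : nat :=
  \big[minn/n]_(c in C) hdist u c.

Definition covering_radius (F : finFieldType) (n : nat) (C : {set 'rV[F]_n})
  : nat := \max_(u : 'rV[F]_n) dist_to C u.

Definition deep_hole (F : finFieldType) (n : nat) (C : {set 'rV[F]_n})
  (v : 'rV[F]_n) : Prop := dist_to C v = covering_radius C.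

(* Main.v *)
Require Import Defs.
From HB Require Import structures.
From mathcomp Require Import all_boot all_order all_algebra zify ring.
Set Implicit Arguments. Unset Strict Implicit. Unset Printing Implicit Defensive.
Import GRing.Theory.
Local Open Scope ring_scope.


Definition ev (F : fieldType) (A B : {poly F}) (p : F * F) : F := A.[p.1] + B.[p.1] * p.2.
Definition oncurve (F : fieldType) (s t : F) (p : F * F) : bool := p.2 ^+ 2 == p.1 ^+ 3 + s * p.1 + t.
Definition piX (F : fieldType) (X : seq (F * F)) : {poly F} := \prod_(p <- X) ('X - p.1%:P).

Lemma ev_factor (F : fieldType) (A B : {poly F}) a q :
  ev (A * ('X - a%:P)) (B * ('X - a%:P)) q = (q.1 - a) * ev A B q.
Proof. rewrite /ev !hornerE; ring. Qed.

Lemma same_x (F : fieldType) (s t : F) (p q : F * F) :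
  oncurve s t p -> oncurve s t q -> p.1 = q.1 -> q.2 = p.2 \/ q.2 = - p.2.
Proof.
case: p q => a b [a' b'] /= /eqP hp /eqP hq ea; subst a'.
have : (b' - b) * (b' + b) = 0 by rewrite -subr_sqr hq hp subrr.
move/eqP; rewrite mulf_eq0 => /orP [] /eqP h; [left | right].
  by apply/eqP; rewrite -subr_eq0 h.
by apply/eqP; rewrite -subr_eq0 opprK h.
Qed.

Lemma root_factor (F : fieldType) (P : {poly F}) a : P.[a] = 0 ->
  exists P', P = P' * ('X - a%:P).
Proof. by move=> h; apply/factor_theorem; rewrite /root h. Qed.

Lemma Vlem (F : fieldType) (s t : F) (X : seq (F * F)) :
  uniq X -> all (oncurve s t) X -> forall A B C D : {poly F},
  {in X, forall p, ev A B p = 0} -> {in X, forall p, ev C D p = 0} ->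
  piX X %| D * A - C * B.
Proof.
move: {2}(size X) (leqnn (size X)) => n; elim: n X => [|n IH] [|[a b] X] //=;
  try by move=> *; rewrite /piX big_nil dvd1p.
move=> hsz /andP [hnX huX] /andP [hab hall] A B C D hf hh.
rewrite /piX big_cons /= -/(piX X).
have hf0 : A.[a] + B.[a] * b = 0 by have := hf (a, b); rewrite inE eqxx; apply.
have hh0 : C.[a] + D.[a] * b = 0 by have := hh (a, b); rewrite inE eqxx; apply.
have hfX : {in X, forall p, ev A B p = 0} by move=> p hp; apply: hf; rewrite inE hp orbT.
have hhX : {in X, forall p, ev C D p = 0} by move=> p hp; apply: hh; rewrite inE hp orbT.
have hallX : forall q, q \in X -> oncurve s t q by move=> q hq; exact: (allP hall).
case: (boolP ((a, - b) \in X)) => hbar.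
- have hb : b - - b != 0.
    rewrite subr_eq0; apply/negP => /eqP e; move: hnX; by rewrite {1}e hbar.
  have hf1 : A.[a] + B.[a] * (- b) = 0 by have := hfX _ hbar.
  have hh1 : C.[a] + D.[a] * (- b) = 0 by have := hhX _ hbar.
  have hB : B.[a] = 0.
    have e : B.[a] * (b - - b) = (A.[a] + B.[a] * b) - (A.[a] + B.[a] * (- b)) by ring.
    by move: e; rewrite hf0 hf1 subrr => /eqP; rewrite mulf_eq0 (negbTE hb) orbF => /eqP.
  have hD : D.[a] = 0.
    have e : D.[a] * (b - - b) = (C.[a] + D.[a] * b) - (C.[a] + D.[a] * (- b)) by ring.
    by move: e; rewrite hh0 hh1 subrr => /eqP; rewrite mulf_eq0 (negbTE hb) orbF => /eqP.
  have hA : A.[a] = 0 by move: hf0; rewrite hB mul0r addr0.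
  have hC : C.[a] = 0 by move: hh0; rewrite hD mul0r addr0.
  case: (root_factor hA) => A' eA; case: (root_factor hB) => B' eB.
  case: (root_factor hC) => C' eC; case: (root_factor hD) => D' eD.
  set X' := rem (a, - b) X.
  have hperm := perm_to_rem hbar.
  rewrite /piX (perm_big _ hperm) big_cons /= -/(piX X').
  have -> : D * A - C * B = (('X - a%:P) * ('X - a%:P)) * (D' * A' - C' * B').
    by rewrite eA eB eC eD; ring.
  rewrite mulrA; apply: dvdp_mul => //.
  have hX'X : forall q, q \in X' -> q \in X by move=> q; apply: mem_rem.
  have hq1 : forall q, q \in X' -> q.1 - a != 0.
    move=> [a' b'] hq; rewrite subr_eq0; apply/eqP => /= ea.
    have hq' := hX'X _ hq.
    case: (same_x hab (hallX _ hq') (esym ea)) => /= eb.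
      by move: hnX; rewrite -ea -eb hq'.
    by move: hq; rewrite (mem_rem_uniq _ huX) /= -ea -eb inE eqxx.
  apply: IH.
  + by rewrite size_rem //; move: hsz; case: (size X) => // m /=; lia.
  + exact: rem_uniq.
  + by apply/allP => q hq; apply: hallX; apply: hX'X.
  + move=> q hq; have := hfX _ (hX'X _ hq); rewrite eA eB ev_factor.
    by move/eqP; rewrite mulf_eq0 (negbTE (hq1 _ hq)) /= => /eqP.
  + move=> q hq; have := hhX _ (hX'X _ hq); rewrite eC eD ev_factor.
    by move/eqP; rewrite mulf_eq0 (negbTE (hq1 _ hq)) /= => /eqP.
- have hq1 : forall q, q \in X -> q.1 - a != 0.
    move=> [a' b'] hq; rewrite subr_eq0; apply/eqP => /= ea.
    case: (same_x hab (hallX _ hq) (esym ea)) => /= eb.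
      by move: hnX; rewrite -ea -eb hq.
    by move: hbar; rewrite -ea -eb hq.
  have hsz' : (size X <= n)%N by [].
  case: (boolP (B.[a] == 0)) => [/eqP hB | hB].
  + have hA : A.[a] = 0 by move: hf0; rewrite hB mul0r addr0.
    case: (root_factor hA) => A' eA; case: (root_factor hB) => B' eB.
    have -> : D * A - C * B = (D * A' - C * B') * ('X - a%:P).
      by rewrite eA eB; ring.
    rewrite mulrC; apply: dvdp_mul => //; apply: IH => //.
    move=> q hq; have := hfX _ hq; rewrite eA eB ev_factor.
    by move/eqP; rewrite mulf_eq0 (negbTE (hq1 _ hq)) /= => /eqP.
  + set l := D.[a] / B.[a].
    set C1 := C - l%:P * A; set D1 := D - l%:P * B.
    have hA : A.[a] = - (B.[a] * b) by apply/eqP; rewrite -subr_eq0 opprK hf0.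
    have hC : C.[a] = - (D.[a] * b) by apply/eqP; rewrite -subr_eq0 opprK hh0.
    have hC1 : C1.[a] = 0.
      rewrite /C1 !hornerE hA hC /l; field; exact: hB.
    have hD1 : D1.[a] = 0.
      rewrite /D1 !hornerE /l; field; exact: hB.
    case: (root_factor hC1) => C' eC; case: (root_factor hD1) => D' eD.
    have -> : D * A - C * B = (D' * A - C' * B) * ('X - a%:P).
      have -> : D * A - C * B = D1 * A - C1 * B by rewrite /D1 /C1; ring.
      by rewrite eC eD; ring.
    rewrite mulrC; apply: dvdp_mul => //; apply: IH => //.
    move=> q hq.
    have : ev C1 D1 q = 0.
      rewrite /ev /C1 /D1 !hornerE.
      have := hhX _ hq; have := hfX _ hq; rewrite /ev => e1 e2.
      by rewrite -[RHS](subr0 0) -{1}e2 -(mulr0 l) -{1}e1; ring.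
    rewrite eC eD ev_factor.
    by move/eqP; rewrite mulf_eq0 (negbTE (hq1 _ hq)) /= => /eqP.
Qed.


Definition inR (F : fieldType) (j : nat) (A B : {poly F}) : bool :=
  ((size A).*2 <= j.+2)%N && ((size B).*2 <= j.-1)%N.

Definition gp (F : fieldType) (s t : F) : {poly F} := 'X^3 + (s *: 'X + t%:P).

Lemma size_gp (F : fieldType) (s t : F) : size (gp s t) = 4%N.
Proof.
rewrite /gp size_polyDl size_polyXn //.
apply: leq_ltn_trans (size_polyD _ _) _.
rewrite gtn_max; apply/andP; split.
  by apply: leq_ltn_trans (size_scale_leq _ _) _; rewrite size_polyX.
by apply: leq_ltn_trans (size_polyC_leq1 _) _.
Qed.

Lemma horner_gp (F : fieldType) (s t a : F) : (gp s t).[a] = a ^+ 3 + s * a + t.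
Proof. by rewrite /gp hornerD hornerXn hornerD hornerZ hornerX hornerC addrA. Qed.

Lemma szM (F : fieldType) (p q : {poly F}) :
  (size p = 0%N /\ size (p * q) = 0%N) \/ (size q = 0%N /\ size (p * q) = 0%N) \/
  ((0 < size p)%N /\ (0 < size q)%N /\ size (p * q) = (size p + size q).-1).
Proof.
have [->|hp] := eqVneq p 0; first by left; rewrite mul0r size_poly0.
have [->|hq] := eqVneq q 0; first by right; left; rewrite mulr0 size_poly0.
by right; right; rewrite size_mul // !size_poly_gt0 hp hq.
Qed.

Lemma szB (F : fieldType) (p q : {poly F}) :
  (size p = size q) \/ (size (p - q) = maxn (size p) (size q)).
Proof.
have [e|ne] := eqVneq (size p) (size q); [by left | right].
case: (ltngtP (size p) (size q)) ne => // h _.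
  by rewrite addrC size_polyDl size_polyN ?(maxn_idPr (ltnW h)).
by rewrite size_polyDl ?size_polyN // (maxn_idPl (ltnW h)).
Qed.

Lemma szB' (F : fieldType) (p q : {poly F}) :
  (size (p - q)%R <= maxn (size p) (size q))%N.
Proof. by apply: leq_trans (size_polyD _ _) _; rewrite size_polyN. Qed.

Lemma szdvd (F : fieldType) (p q : {poly F}) : p %| q -> size q = 0%N \/ (size p <= size q)%N.
Proof.
have [->|hq] := eqVneq q 0; first by left; rewrite size_poly0.
by move=> h; right; apply: dvdp_leq.
Qed.

Ltac slia :=
  repeat match goal with H : context [size _] |- _ => revert H end;
  repeat match goal with |- context [size ?p] =>
    let n := fresh "n" in set n := size p; clearbody n end;
  intros; lia.

Lemma CLlem (F : fieldType) (s t : F) (X : seq (F * F)) (m : nat) :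
  (2 <= m)%N -> uniq X -> all (oncurve s t) X -> size X = m.-1 ->
  forall A B C D : {poly F}, inR m.-1 A B -> (A != 0) || (B != 0) -> inR m C D ->
  (if odd m then size D = m./2 else size C = m./2.+1) ->
  {in X, forall p, ev A B p = 0} -> {in X, forall p, ev C D p = 0} -> False.
Proof.
move=> hm hu hall hX A B C D /andP [hA hB] hAB /andP [hC hD] htop hf hh.
have hpi : size (piX X) = m by rewrite /piX size_prod_XsubC hX; lia.
have hN : piX X %| A * A - (B * gp s t) * B.
  apply: (Vlem hu hall) => // p hp.
  have /eqP hc := allP hall p hp.
  have := hf p hp; case: p hp hc => a b hp /= hc.
  rewrite /ev /= => e; rewrite hornerM horner_gp -hc.
  by rewrite -[RHS](mulr0 b) -e; ring.
have hV : piX X %| D * A - C * B by apply: (Vlem hu hall).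
have hg := size_gp s t.
have szAA : size (A * A) = (size A + size A).-1.
  have [->|nA] := eqVneq A 0; first by rewrite mul0r size_poly0.
  by rewrite size_mul.
have gn0 : gp s t != 0 by rewrite -size_poly_gt0 hg.
have szBgB : B != 0 -> size (B * gp s t * B) = ((size B).*2 + 2)%N.
  move=> nB; rewrite size_mul ?mulf_neq0 // size_mul // hg; slia.
have hNsz : (m <= (size A + size A).-1)%N \/ (B != 0 /\ (m <= (size B).*2 + 2)%N).
  have [eB|nB] := eqVneq B 0.
    move: hN; rewrite eB mul0r mulr0 subr0 => hN.
    have nA : A != 0 by move: hAB; rewrite eB eqxx orbF.
    left; rewrite -szAA; apply: (leq_trans _ (dvdp_leq _ hN)) ; first by rewrite hpi.
    by rewrite mulf_neq0.
  have e1 := szBgB nB.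
  have := szB (A * A) (B * gp s t * B); rewrite szAA e1 => [[]]; first slia.
  move=> e2; have := szdvd hN; rewrite e2 hpi; slia.
have := odd_double_half m.
have hDA := size_polyMleq D A; have hCB := size_polyMleq C B.
have hV2 := szB (D * A) (C * B); have hV3 := szdvd hV; rewrite hpi in hV3.
move: htop; case: (odd m) => /= htop hmd.
-
  have sA1 : size A = m./2.+1 by slia.
  have nA : A != 0 by rewrite -size_poly_gt0 sA1.
  have nD : D != 0 by rewrite -size_poly_gt0 htop; slia.
  have eDA : size (D * A) = (m./2 + m./2.+1).-1 by rewrite size_mul // htop sA1.
  slia.
-
  have [nB sB1] : B != 0 /\ size B = m./2.-1 by slia.
  have nC : C != 0 by rewrite -size_poly_gt0 htop.
  have eCB : size (C * B) = (m./2.+1 + m./2.-1).-1 by rewrite size_mul // htop sB1.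
  slia.
Qed.


Lemma card_gt1F (F : finFieldType) : (1 < #|F|)%N.
Proof. by apply/card_gt1P; exists 0, 1; rewrite eq_sym oner_neq0. Qed.

Lemma ev_sub (F : fieldType) (A1 B1 A2 B2 : {poly F}) p :
  ev (A1 - A2) (B1 - B2) p = ev A1 B1 p - ev A2 B2 p.
Proof. rewrite /ev !hornerE; ring. Qed.

Lemma ev_add (F : fieldType) (A1 B1 A2 B2 : {poly F}) p :
  ev (A1 + A2) (B1 + B2) p = ev A1 B1 p + ev A2 B2 p.
Proof. by rewrite /ev !hornerD mulrDl addrACA. Qed.

Lemma ev_lin (F : fieldType) (A1 B1 A2 B2 : {poly F}) (c : F) p :
  ev (A1 + c *: A2) (B1 + c *: B2) p = ev A1 B1 p + c * ev A2 B2 p.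
Proof. rewrite /ev !hornerE; ring. Qed.

Lemma inR_sub (F : fieldType) j (A1 B1 A2 B2 : {poly F}) :
  inR j A1 B1 -> inR j A2 B2 -> inR j (A1 - A2) (B1 - B2).
Proof.
rewrite /inR => /andP [h1 h2] /andP [h3 h4].
have := szB' A1 A2; have := szB' B1 B2; slia.
Qed.

Lemma inR_lin (F : fieldType) j (A1 B1 A2 B2 : {poly F}) c :
  inR j A1 B1 -> inR j A2 B2 -> inR j (A1 + c *: A2) (B1 + c *: B2).
Proof.
rewrite /inR => /andP [h1 h2] /andP [h3 h4].
have := size_polyD A1 (c *: A2); have := size_polyD B1 (c *: B2).
have := size_scale_leq c A2; have := size_scale_leq c B2; slia.
Qed.

Lemma inR_mono (F : fieldType) j k (A B : {poly F}) : (j <= k)%N -> inR j A B -> inR k A B.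
Proof. by rewrite /inR => h /andP [h1 h2]; slia. Qed.

Lemma kerlem (F : finFieldType) j (X : seq (F * F)) : (size X < j)%N ->
  exists A B : {poly F}, [/\ inR j A B, (A != 0) || (B != 0) & {in X, forall p, ev A B p = 0}].
Proof.
move=> hX.
pose pA (c : (j./2.+1).-tuple F) : {poly F} := \poly_(i < j./2.+1) nth 0 c i.
pose pB (c : ((j.-1)./2).-tuple F) : {poly F} := \poly_(i < (j.-1)./2) nth 0 c i.
pose phi (x : (j./2.+1).-tuple F * ((j.-1)./2).-tuple F) : 'rV[F]_(size X) :=
  \row_(i < size X) ev (pA x.1) (pB x.2) (nth (0, 0) X i).
have hin : forall x, inR j (pA x.1) (pB x.2).
  move=> x; rewrite /inR; have := size_poly (j./2.+1) (fun i => nth 0 x.1 i).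
  have := size_poly ((j.-1)./2) (fun i => nth 0 x.2 i); rewrite /pA /pB; slia.
case: (boolP [exists x, exists y, (phi x == phi y) && (x != y)]); last first.
  move=> H; exfalso.
  have inj : injective phi.
    move=> x y e; apply/eqP; apply: contraNT H => n; apply/existsP; exists x.
    by apply/existsP; exists y; rewrite e eqxx.
  have := leq_card _ inj; rewrite card_prod !card_tuple card_mx mul1n -expnD leqNgt.
  rewrite (ltn_exp2l _ _ (card_gt1F F)); move/negP; apply; lia.
move=> /existsP [x /existsP [y /andP [/eqP e nxy]]].
exists (pA x.1 - pA y.1), (pB x.2 - pB y.2); split.
- exact: inR_sub.
- apply: contraR nxy; rewrite negb_or !negbK !subr_eq0 => /andP [/eqP e1 /eqP e2].
  case: x y e e1 e2 => [x1 x2] [y1 y2] /= _ e1 e2.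
  apply/eqP; congr (_, _); apply: eq_from_tnth => k; rewrite !(tnth_nth 0).
  + have := congr1 (fun p : {poly F} => p`_k) e1; by rewrite /pA !coef_poly ltn_ord.
  + have := congr1 (fun p : {poly F} => p`_k) e2; by rewrite /pB !coef_poly ltn_ord.
- move=> p hp; rewrite ev_sub; apply/eqP; rewrite subr_eq0; apply/eqP.
  have hi : (index p X < size X)%N by rewrite index_mem.
  have := congr1 (fun r : 'rV[F]_(size X) => r 0 (Ordinal hi)) e.
  by rewrite /phi !mxE /= nth_index.
Qed.

Lemma Elem (F : finFieldType) (s t : F) m : forall X : seq (F * F),
  uniq X -> all (oncurve s t) X -> (size X < m)%N -> forall tg : F * F -> F,
  exists A B : {poly F}, inR m A B /\ {in X, forall p, ev A B p = tg p}.
Proof.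
elim: m => [|m IH] X hu hall hX tg; first by [].
have [hXm|hXm] := ltnP (size X) m.
  have [A [B [hR hE]]] := IH X hu hall hXm tg.
  by exists A, B; split => //; apply: inR_mono hR.
case: X hu hall hX hXm => [|p X'] hu hall hX hXm.
  by exists 0, 0; split => //; rewrite /inR size_poly0.
move: hu hall => /= /andP [hpX' hu'] /andP [hp hall'].
have hX' : (size X' < m)%N by move: hX hXm => /=; lia.
have hM : (2 <= m.+1)%N by move: hX hXm => /=; lia.
have hsz : size (p :: X') = m.+1.-1 by move: hX hXm => /=; lia.
have [A0 [B0 [hR0 h0p h0X]]] : exists A0 B0 : {poly F},
    [/\ inR m.+1 A0 B0, ev A0 B0 p != 0 & {in X', forall q, ev A0 B0 q = 0}].
  have [A [B [hRf hnz hfX]]] := kerlem hX'.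
  have [C [D [hRh htop hhX]]] : exists C D : {poly F}, [/\ inR m.+1 C D,
      (if odd m.+1 then size D = m.+1./2 else size C = m.+1./2.+1) &
      {in X', forall q, ev C D q = 0}].
    case hodd: (odd m.+1).
    - have [A' [B' [hR' hE']]] := IH X' hu' hall' hX' (fun q => - ev 0 ('X^(m.+1./2.-1)) q).
      exists A', ('X^(m.+1./2.-1) + B'); split.
      + move: hR'; rewrite /inR => /andP [h1 h2].
        have := size_polyD ('X^(m.+1./2.-1)) B'; rewrite size_polyXn.
        have := odd_double_half m.+1; rewrite hodd; slia.
      + move: hR'; rewrite /inR => /andP [h1 h2].
        have := odd_double_half m.+1; rewrite hodd => hmd.
        rewrite size_polyDl size_polyXn; slia.
      + move=> q hq.
        have -> : ev A' ('X^(m.+1./2.-1) + B') q = ev 0 ('X^(m.+1./2.-1)) q + ev A' B' q.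
          by rewrite -ev_add add0r.
        by rewrite hE' // addrN.
    - have [A' [B' [hR' hE']]] := IH X' hu' hall' hX' (fun q => - ev ('X^(m.+1./2)) 0 q).
      exists ('X^(m.+1./2) + A'), B'; split.
      + move: hR'; rewrite /inR => /andP [h1 h2].
        have := size_polyD ('X^(m.+1./2)) A'; rewrite size_polyXn.
        have := odd_double_half m.+1; rewrite hodd; slia.
      + move: hR'; rewrite /inR => /andP [h1 h2].
        have := odd_double_half m.+1; rewrite hodd => hmd.
        rewrite size_polyDl size_polyXn; slia.
      + move=> q hq.
        have -> : ev ('X^(m.+1./2) + A') B' q = ev ('X^(m.+1./2)) 0 q + ev A' B' q.
          by rewrite -ev_add add0r.
        by rewrite hE' // addrN.
  have [fp|fp] := eqVneq (ev A B p) 0; last first.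
    by exists A, B; split => //; apply: inR_mono hRf.
  have [hp0|hp0] := eqVneq (ev C D p) 0; last by exists C, D.
  exfalso; apply: (CLlem (s:=s) (t:=t) hM _ _ hsz hRf hnz hRh htop).
  + by rewrite /= hpX' hu'.
  + by rewrite /= hp hall'.
  + by move=> q; rewrite inE => /orP [/eqP -> | /hfX].
  + by move=> q; rewrite inE => /orP [/eqP -> | /hhX].
have [A1 [B1 [hR1 hE1]]] := IH X' hu' hall' hX' tg.
set c := (tg p - ev A1 B1 p) / ev A0 B0 p.
exists (A1 + c *: A0), (B1 + c *: B0); split.
  by apply: inR_lin => //; apply: inR_mono hR1.
move=> q; rewrite inE ev_lin => /orP [/eqP -> | hq].
  by rewrite /c mulfVK // addrC subrK.
by rewrite h0X // mulr0 addr0 hE1.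
Qed.


Lemma mono_ev (F : fieldType) k (A B : {poly F}) : (1 <= k)%N -> inR k A B ->
  exists u : 'rV[F]_k, forall a b, \sum_(r < k) u 0 r * mono k r a b = ev A B (a, b).
Proof.
move=> hk /andP [hA hB].
set K1 := k./2.+1.
exists (\row_(r < k) (if (r < K1)%N then A`_r else B`_(r - K1))) => a b.
pose G r := if (r < K1)%N then A`_r * a ^+ r else B`_(r - K1) * (a ^+ (r - K1) * b).
have -> : \sum_(r < k) (\row_(r < k) (if (r < K1)%N then A`_r else B`_(r - K1))) 0 r
    * mono k r a b = \sum_(r < k) G r.
  by apply: eq_bigr => r _; rewrite mxE /mono /G -/K1; case: ifP.
rewrite -(big_mkord xpredT) (big_cat_nat _ (n := K1)) //=; last by rewrite /K1; lia.
rewrite /ev /=; congr (_ + _).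
  rewrite (horner_coef_wide _ (n := K1)); last by rewrite /K1; lia.
  rewrite -(big_mkord xpredT (fun i => A`_i * a ^+ i)); apply: eq_big_nat => r /andP [_ hr].
  by rewrite /G hr.
rewrite -{1}(add0n K1) big_addn (horner_coef_wide _ (n := k - K1)); last by rewrite /K1; lia.
rewrite -(big_mkord xpredT (fun i => B`_i * a ^+ i)) mulr_suml; apply: eq_big_nat => r _.
by rewrite /G ltnNge leq_addl /= addnK mulrA.
Qed.

Lemma dot_uH (F : fieldType) n k (M : 'M[F]_(k, n)) (v : 'rV[F]_n) (u : 'rV[F]_k) :
  v *m (u *m M)^T = (u *m (M *m v^T))^T.
Proof. by rewrite !trmx_mul trmxK mulmxA. Qed.

Lemma synd_entry (F : fieldType) n k (alpha beta : 'I_n -> F) (v : 'rV[F]_n) (r : 'I_k) :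
  (Hmat k alpha beta *m v^T) r 0 = \sum_i mono k r (alpha i) (beta i) * v 0 i.
Proof. by rewrite mxE; apply: eq_bigr => i _; rewrite !mxE. Qed.

Lemma dot_ev (F : fieldType) n k (alpha beta : 'I_n -> F) (v : 'rV[F]_n) (u : 'rV[F]_k)
  (A B : {poly F}) :
  (forall a b, \sum_(r < k) u 0 r * mono k r a b = ev A B (a, b)) ->
  (v *m (u *m Hmat k alpha beta)^T) 0 0 = \sum_i v 0 i * ev A B (alpha i, beta i).
Proof.
move=> hu; rewrite dot_uH mxE mxE.
under eq_bigr do rewrite synd_entry mulr_sumr.
rewrite exchange_big; apply: eq_bigr => i _; rewrite -hu mulr_sumr.
apply: eq_bigr => r _; ring.
Qed.

Lemma ann_k (F : finFieldType) n k (alpha beta : 'I_n -> F) (v : 'rV[F]_n) :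
  (1 <= k)%N -> v \in COmega k alpha beta -> forall A B, inR k A B ->
  \sum_i v 0 i * ev A B (alpha i, beta i) = 0.
Proof.
move=> hk hv A B hR; have [u hu] := mono_ev hk hR.
rewrite -(dot_ev _ _ _ hu).
move: hv; rewrite inE => /forallP /(_ (u *m Hmat k alpha beta)) /implyP.
rewrite inE; case/(_ _)/Wrap => [|/eqP -> ]; last by rewrite mxE.
by apply/existsP; exists u.
Qed.

Lemma ann_inf (F : finFieldType) n k (alpha beta : 'I_n -> F) (v : 'rV[F]_n) :
  (2 <= k)%N -> v \in COmega_minus k alpha beta PInf -> forall A B, inR k.-1 A B ->
  \sum_i v 0 i * ev A B (alpha i, beta i) = 0.
Proof.
move=> hk hv; apply: ann_k => //; lia.
Qed.

Lemma ann_aff (F : finFieldType) n k (alpha beta : 'I_n -> F) (v : 'rV[F]_n) a b :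
  (1 <= k)%N -> v \in COmega_minus k alpha beta (PAff a b) -> forall A B, inR k A B ->
  ev A B (a, b) = 0 -> \sum_i v 0 i * ev A B (alpha i, beta i) = 0.
Proof.
move=> hk hv A B hR hab; have [u hu] := mono_ev hk hR.
rewrite -(dot_ev _ _ _ hu).
move: hv; rewrite inE => /forallP /(_ (u *m Hmat k alpha beta)) /implyP hv.
have : u *m Hmat k alpha beta \in CL_minus k alpha beta (PAff a b).
  rewrite inE; apply/existsP; exists u; rewrite eqxx andbT.
  apply/eqP/matrixP => i j; rewrite !ord1 !mxE; transitivity (ev A B (a, b)); last exact: hab.
  by rewrite -(hu a b); apply: eq_bigr => r _; rewrite mxE.
by move/hv/eqP => ->; rewrite mxE.
Qed.

Lemma sum_delta (F : fieldType) n (x : 'I_n -> F) (r : 'I_n) :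
  \sum_j (j == r)%:R * x j = x r.
Proof.
rewrite (bigD1 r) //= eqxx mul1r big1 ?addr0 // => j /negbTE ->; by rewrite mul0r.
Qed.

Lemma core (F : finFieldType) (s t : F) n (alpha beta : 'I_n -> F)
  (hD : forall i : 'I_n, beta i ^+ 2 = alpha i ^+ 3 + s * alpha i + t)
  (hinj : injective (fun i : 'I_n => (alpha i, beta i)))
  (T : {set 'I_n}) (Y : seq (F * F)) m (w : 'I_n -> F) :
  uniq Y -> all (oncurve s t) Y -> (forall j, (alpha j, beta j) \notin Y) ->
  (#|T| + size Y < m)%N -> (forall j, j \notin T -> w j = 0) ->
  (forall A B, inR m A B -> {in Y, forall p, ev A B p = 0} ->
     \sum_j w j * ev A B (alpha j, beta j) = 0) -> forall i, w i = 0.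
Proof.
move=> hY hallY hnY hsz hw hann i.
case: (boolP (i \in T)) => hi; last exact: hw.
set X := [seq (alpha j, beta j) | j <- enum T] ++ Y.
have hu : uniq X.
  rewrite cat_uniq hY andbT (map_inj_uniq hinj) enum_uniq /=.
  by apply/hasPn => p hp; apply/mapP => [[j _ ej]]; move: (hnY j); rewrite -ej hp.
have hall : all (oncurve s t) X.
  rewrite all_cat hallY andbT; apply/allP => p /mapP [j _ ->].
  by rewrite /oncurve /= hD.
have hX : (size X < m)%N by rewrite size_cat size_map -cardE.
have [A [B [hR hE]]] := Elem hu hall hX (fun p => if p == (alpha i, beta i) then 1 else 0).
have := hann A B hR.
have hYe : {in Y, forall p, ev A B p = 0}.
  move=> p hp; rewrite hE ?mem_cat ?hp ?orbT //; case: eqP => // ep.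
  by move: (hnY i); rewrite -ep hp.
move/(_ hYe); rewrite (bigD1 i) //= big1 ?addr0.
  rewrite hE ?eqxx ?mulr1 //; by rewrite mem_cat map_f ?mem_enum.
move=> j hj; case: (boolP (j \in T)) => hjT; last by rewrite hw ?mul0r.
rewrite hE; last by rewrite mem_cat map_f ?mem_enum.
case: eqP => [/hinj ej|]; last by rewrite mulr0.
by move: hj; rewrite ej eqxx.
Qed.

Definition mA (F : fieldType) k (r : nat) : {poly F} := if (r < k./2.+1)%N then 'X^r else 0.
Definition mB (F : fieldType) k (r : nat) : {poly F} := if (r < k./2.+1)%N then 0 else 'X^(r - k./2.+1).

Lemma mono_mAB (F : fieldType) k r (a b : F) : mono k r a b = ev (mA F k r) (mB F k r) (a, b).
Proof. rewrite /mono /mA /mB /ev /=; case: ifP => _; rewrite !hornerE //=; ring. Qed.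

Lemma inR_mAB (F : fieldType) k r : (2 <= k)%N -> (r < k)%N ->
  (if odd k then r != k.-1 else r != k./2) -> inR k.-1 (mA F k r) (mB F k r).
Proof.
move=> hk hr; rewrite /inR /mA /mB; have := odd_double_half k.
case: ltnP => h; rewrite ?size_polyXn ?size_poly0; case: (odd k) => /= hkd /eqP hne; lia.
Qed.

Unset Implicit Arguments.

Theorem theorem3p6
  (F : finFieldType) (s t : F) (n k : nat) (alpha beta : 'I_n -> F)
  (hodd : odd #|F|)
  (hE : 4%:R * s ^+ 3 + 27%:R * t ^+ 2 != 0)
  (hD : forall i : 'I_n, beta i ^+ 2 = alpha i ^+ 3 + s * alpha i + t)
  (hinj : injective (fun i : 'I_n => (alpha i, beta i)))
  (hk2 : (2 <= k)%N) (hkn : (k <= n - 2)%N)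
  (hrho : covering_radius (COmega k alpha beta) = (k - 1)%N)
  (P : point F) (hP : on_curve s t P)
  (hPD : forall i : 'I_n, P <> PAff (alpha i) (beta i)) :
  forall v : 'rV[F]_n,
    v \in COmega_minus k alpha beta P ->
    v \notin COmega k alpha beta ->
    [/\ deep_hole (COmega k alpha beta) v,
        (P = PInf ->
           if odd k then
             forall r : 'I_k, (Hmat k alpha beta *m v^T) r 0 =
               (if (r : nat) == k.-1 then
                  \sum_(i < n) alpha i ^+ (k - 3)./2 * beta i * v 0 i
                else 0)
           else
             forall r : 'I_k, (Hmat k alpha beta *m v^T) r 0 =
               (if (r : nat) == k./2 then
                  \sum_(i < n) alpha i ^+ k./2 * v 0 i
                else 0))
      & (forall a b : F, P = PAff a b ->
           Hmat k alpha beta *m v^T = (\sum_(i < n) v 0 i) *: evcol k a b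
           /\ \sum_(i < n) v 0 i != 0)].
Proof.
move=> v hv hnv.
have hk1 : (1 <= k)%N by lia.
(* generic: a codeword c of C agreeing with v except on few places forces v = c *)
have hdist : forall c, c \in COmega k alpha beta -> (k.-1 <= hdist v c)%N.
  move=> c hc; rewrite leqNgt; apply/negP => hlt.
  set T := [set i | v 0 i != c 0 i].
  have hT : #|T| = hdist v c by [].
  have hw : forall j, j \notin T -> v 0 j - c 0 j = 0.
    by move=> j; rewrite inE negbK => /eqP ->; rewrite subrr.
  have hvc : forall i, v 0 i - c 0 i = 0.
    case: P hP hPD hv => [|a b] hP hPD hv.
    - apply: (@core F s t n alpha beta hD hinj T [::] k.-1) => //.
        by rewrite addn0 hT.
      move=> A B hR _; under eq_bigr do rewrite mulrBl.
      rewrite sumrB (ann_inf hk2 hv hR) (ann_k hk1 hc) ?subrr //.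
      by apply: inR_mono hR; lia.
    - apply: (@core F s t n alpha beta hD hinj T [:: (a, b)] k) => //.
      + by rewrite /= andbT.
      + by move=> j; rewrite inE; apply/eqP => e; apply: (hPD j); case: e => -> ->.
      + by rewrite hT /=; lia.
      move=> A B hR hY; under eq_bigr do rewrite mulrBl.
      rewrite sumrB (ann_aff hk1 hv hR) ?(ann_k hk1 hc) ?subrr //.
      by apply: hY; rewrite inE.
  move: hnv; have -> : v = c.
    by apply/matrixP => i j; rewrite ord1; apply/eqP; rewrite -subr_eq0; apply/eqP.
  by rewrite hc.
split.
-
  rewrite /deep_hole hrho; apply/eqP; rewrite eqn_leq; apply/andP; split.
    rewrite -hrho /covering_radius.
    exact: (@leq_bigmax _ (fun u => dist_to (COmega k alpha beta) u) v).
  rewrite /dist_to subn1; apply: (big_ind (fun x => k.-1 <= x)%N).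
  + lia.
  + by move=> x y hx hy; rewrite leq_min hx hy.
  + exact: hdist.
-
  move=> eP; subst P.
  have hann := ann_inf hk2 hv.
  have key : forall r : 'I_k, (if odd k then (r : nat) != k.-1 else (r : nat) != k./2) ->
      (Hmat k alpha beta *m v^T) r 0 = 0.
    move=> r hr; rewrite synd_entry -[RHS](hann _ _ (inR_mAB F hk2 (ltn_ord r) hr)).
    by apply: eq_bigr => i _; rewrite mono_mAB mulrC.
  have hkd := odd_double_half k.
  case ho: (odd k) => r; move: (key r); rewrite ho => key'.
  + case: eqP => [er | /eqP ne]; last by apply: key'.
    rewrite synd_entry; apply: eq_bigr => i _; rewrite /mono er.
    rewrite ltnNge (_ : (k./2.+1 <= k.-1)%N); last by move: hkd; rewrite ho; lia.
    by rewrite /= (_ : (k.-1 - k./2.+1 = (k - 3)./2)%N) //; move: hkd; rewrite ho; lia.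
  + case: eqP => [er | /eqP ne]; last by apply: key'.
    rewrite synd_entry; apply: eq_bigr => i _; by rewrite /mono er ltnSn.
-
  move=> a b eP; subst P.
  set e := evcol k a b; set S := Hmat k alpha beta *m v^T.
  have i0 : 'I_k by exact: Ordinal hk1.
  pose o0 : 'I_k := Ordinal hk1.
  have he0 : e o0 0 = 1 by rewrite /e mxE /mono /= expr0.
  have hS0 : S o0 0 = \sum_i v 0 i.
    by rewrite /S synd_entry; apply: eq_bigr => i _; rewrite /mono /= expr0 mul1r.
  have huS : forall u : 'rV[F]_k, \sum_r u 0 r * e r 0 = 0 -> \sum_r u 0 r * S r 0 = 0.
    move=> u hu.
    have : u *m Hmat k alpha beta \in CL_minus k alpha beta (PAff a b).
      rewrite inE; apply/existsP; exists u; rewrite eqxx andbT.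
      by apply/eqP/matrixP => i j; rewrite !ord1 !mxE -[RHS]hu.
    move: hv; rewrite inE => /forallP /(_ (u *m Hmat k alpha beta)) /implyP hv'.
    move/hv'/eqP => e0; have := congr1 (fun M : 'M_1 => M 0 0) e0.
    by rewrite dot_uH !mxE -/S.
  have hSe : S = (\sum_i v 0 i) *: e.
    apply/matrixP => r j; rewrite ord1 [RHS]mxE -hS0.
    pose u : 'rV[F]_k := \row_j ((j == r)%:R - e r 0 * (j == o0)%:R).
    have := huS u.
    have hsum : forall x : 'I_k -> F, \sum_j u 0 j * x j = x r - e r 0 * x o0.
      move=> x; under eq_bigr do rewrite mxE mulrBl -mulrA.
      by rewrite sumrB sum_delta -mulr_sumr sum_delta.
    rewrite !hsum he0 mulr1 subrr => /(_ erefl) /eqP.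
    by rewrite subr_eq0 => /eqP ->; rewrite mulrC.
  split => //.
  apply/eqP => h0; move: hnv; rewrite inE; apply/negP; rewrite negbK.
  apply/forallP => c; apply/implyP; rewrite inE => /existsP [u /eqP ->].
  apply/eqP/matrixP => i j; rewrite !ord1 dot_uH !mxE -/S hSe h0 scale0r.
  by apply: big1 => r _; rewrite mxE mulr0.
Qed.
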